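(* For every $n\geq0$, $$\sum_{\sigma\in\mathfrak S_n}(xy)^{{\rm L}(\sigma)}\Bigl(\frac{x+y}{2}\Bigr)^{n-2{\rm L}(\sigma)}\beta^{{\rm RLmin}(\sigma)}=\sum_{\sigma\in\mathfrak S_{n+1}}x^{{\rm des}(\sigma)}y^{n-{\rm des}(\sigma)}\Bigl(\frac{\beta}{2}\Bigr)^{{\rm LRmin}(\sigma)+{\rm RLmin}(\sigma)-2}.$$
   Context: For $\sigma=\sigma_1\cdots\sigma_m\in\mathfrak S_m$: ${\rm des}(\sigma)$ is the number of $i\in[m-1]$ with $\sigma_i>\sigma_{i+1}$; ${\rm L}(\sigma)$ (left peaks) is the number of $i$ with $1\le i<m$ and $\sigma_{i-1}<\sigma_i>\sigma_{i+1}$, with the convention $\sigma_0=0$; ${\rm LRmin}(\sigma)$ is the number of $i$ with $\sigma_j>\sigma_i$ for all $j<i$; ${\rm RLmin}(\sigma)$ is the number of $i$ with $\sigma_j>\sigma_i$ for all $j>i$. $\mathfrak S_0$ consists of the empty permutation (contributing $1$). *)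

(* Defs.v *)
From mathcomp Require Import all_boot all_order all_algebra all_fingroup.
Set Implicit Arguments. Unset Strict Implicit. Unset Printing Implicit Defensive.

(* One-line notation of sigma in S_m with values shifted to 1..m, and the
   convention sigma_0 = 0:  sig s i = sigma_i for 1 <= i <= m, sig s 0 = 0. *)
Definition sig (m : nat) (s : 'S_m) (i : nat) : nat :=
  nth 0 (0 :: [seq (s j).+1 | j <- enum 'I_m]) i.

Definition des (m : nat) (s : 'S_m) : nat :=
  \sum_(1 <= i < m) (sig s i.+1 < sig s i).

Definition lpk (m : nat) (s : 'S_m) : nat :=
  \sum_(1 <= i < m) ((sig s i.-1 < sig s i) && (sig s i.+1 < sig s i)).

Definition lrmin (m : nat) (s : 'S_m) : nat :=
  \sum_(1 <= i < m.+1) all (fun j => sig s i < sig s j) (iota 1 i.-1).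

Definition rlmin (m : nat) (s : 'S_m) : nat :=
  \sum_(1 <= i < m.+1) all (fun j => sig s i < sig s j) (iota i.+1 (m - i)).

(* Main.v *)
Require Import Defs.
From mathcomp Require Import all_boot all_order all_algebra all_fingroup.
Import GRing.Theory Num.Theory.
Local Open Scope ring_scope.
From Stdlib Require Import FunctionalExtensionality.
From mathcomp Require Import zify ring.

Set Implicit Arguments. Unset Strict Implicit. Unset Printing Implicit Defensive.

Module Aux.
Local Open Scope nat_scope.

Definition desF m (f : nat -> nat) := \sum_(1 <= i < m) (f i.+1 < f i).
Definition pkF (f : nat -> nat) k := (f k.-1 < f k) && (f k.+1 < f k).
Definition lpkF m f := \sum_(1 <= i < m) pkF f i.
Definition lrF m (f : nat -> nat) :=
  \sum_(1 <= i < m.+1) all (fun j => f i < f j) (iota 1 i.-1).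
Definition rlF m (f : nat -> nat) :=
  \sum_(1 <= i < m.+1) all (fun j => f i < f j) (iota i.+1 (m - i)).
Definition insF (M i : nat) (f : nat -> nat) k :=
  if k <= i then f k else if k == i.+1 then M else f k.-1.

Lemma insF_le M i f k : k <= i -> insF M i f k = f k.
Proof. by rewrite /insF => ->. Qed.
Lemma insF_eq M i f : insF M i f i.+1 = M.
Proof. by rewrite /insF ltnn eqxx. Qed.
Lemma insF_gt M i f k : i.+1 < k -> insF M i f k = f k.-1.
Proof.
move=> h; rewrite /insF ifN; last by rewrite -ltnNge; lia.
by rewrite ifN //; apply/negP=> /eqP; lia.
Qed.

Lemma desF_rec m f : 0 < m -> desF m.+1 f = desF m f + (f m.+1 < f m).
Proof. by move=> hm; rewrite /desF big_nat_recr. Qed.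

Lemma lpkF_rec m f : 0 < m -> lpkF m.+1 f = lpkF m f + pkF f m.
Proof. by move=> hm; rewrite /lpkF big_nat_recr. Qed.

Lemma desF_ins M i f m : i <= m -> f 0 = 0 -> (forall k, f k < M) ->
  desF m.+1 (insF M i f) + ((i < m) && (f i.+1 < f i)) = desF m f + (i < m).
Proof.
move=> /subnK <- f0 fM; elim: (m - i) => [|d IH].
- rewrite add0n ltnn /= !addn0.
  case: i => [|i]; first by rewrite /desF !big_geq.
  rewrite desF_rec //.
  have -> : (insF M i.+1 f i.+2 < insF M i.+1 f i.+1) = false.
    by rewrite /insF leqnn ltnn eqxx /= ltnNge ltnW.
  rewrite addn0 /desF; apply: eq_big_nat => k /andP[_ hk]; rewrite /insF.
  by rewrite !ifT //; lia.
- have -> : d.+1 + i = (d + i).+1 by lia.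
  rewrite desF_rec //.
  case: d IH => [|d] IH.
  + rewrite !add0n ltnn /= !addn0 in IH *.
    have -> : (insF M i f i.+2 < insF M i f i.+1) = true.
      by rewrite insF_eq insF_gt // fM.
    rewrite IH leqnn /=; case: i => [|i] in IH *.
    * by rewrite f0 /desF !big_geq.
    * rewrite [desF i.+2 f]desF_rec //; lia.
  + have -> : (insF M i f (d.+1 + i).+2 < insF M i f (d.+1 + i).+1)
             = (f (d.+1 + i).+1 < f (d.+1 + i)).
      by rewrite !insF_gt //; lia.
    have hi : i < d.+1 + i by lia.
    have hi' : i < (d.+1 + i).+1 by lia.
    rewrite hi in IH; rewrite hi' [in RHS]desF_rec; last lia.
    rewrite addnAC IH; lia.
Qed.

Lemma lpkF_ins M i f m : i <= m -> f 0 = 0 -> (forall k, f k < M) ->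
  lpkF m.+1 (insF M i f) + ((0 < i < m) && pkF f i) + ((i.+1 < m) && pkF f i.+1)
  = lpkF m f + (i < m).
Proof.
move=> /subnK <- f0 fM.
have base : lpkF i.+1 (insF M i f) = lpkF i f.
  case: i => [|i]; first by rewrite /lpkF !big_geq.
  rewrite lpkF_rec //.
  have -> : pkF (insF M i.+1 f) i.+1 = false.
    by rewrite /pkF insF_eq !insF_le // [M < _]ltnNge (ltnW (fM _)) andbF.
  rewrite addn0 /lpkF; apply: eq_big_nat => k /andP[h1 hk].
  by rewrite /pkF !insF_le //; lia.
elim: (m - i) => [|d IH].
- rewrite add0n ltnn /= andbF !addn0; have -> : (i.+1 < i) = false by lia.
  by rewrite addn0.
- have -> : d.+1 + i = (d + i).+1 by lia.
  rewrite lpkF_rec //.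
  case: d IH => [|[|d]] IH.
  + rewrite add0n in IH *.
    have -> : pkF (insF M i f) i.+1 = true.
      by rewrite /pkF insF_eq insF_le // insF_gt // !fM.
    have -> : (i.+1 < i.+1) = false by lia.
    have -> : (i < i.+1) = true by lia.
    rewrite base; case: i => [|i] in IH base *.
    * by rewrite /lpkF !big_geq.
    * rewrite [lpkF i.+2 f]lpkF_rec //=; lia.
  + rewrite add1n in IH *.
    have -> : pkF (insF M i f) i.+2 = false.
      by rewrite /pkF insF_eq insF_gt // ltnNge ltnW.
    have e1 : (i.+1 < i.+1) = false by lia.
    have e2 : (i.+1 < i.+2) = true by lia.
    have e3 : (0 < i < i.+2) = (0 < i) by lia.
    have e4 : (0 < i < i.+1) = (0 < i) by lia.
    have e5 : (i < i.+1) = true by lia.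
    have e6 : (i < i.+2) = true by lia.
    rewrite e1 e4 e5 in IH; rewrite e2 e3 e6 [lpkF i.+2 f]lpkF_rec //; lia.
  + have -> : pkF (insF M i f) (d.+2 + i).+1 = pkF f (d.+2 + i).
      by rewrite /pkF !insF_gt //=; lia.
    have e1 : (0 < i < d.+2 + i) = (0 < i) by lia.
    have e2 : (0 < i < (d.+2 + i).+1) = (0 < i) by lia.
    have e3 : (i.+1 < d.+2 + i) = true by lia.
    have e4 : (i.+1 < (d.+2 + i).+1) = true by lia.
    have e5 : (i < d.+2 + i) = true by lia.
    have e6 : (i < (d.+2 + i).+1) = true by lia.
    rewrite e1 e3 e5 in IH; rewrite e2 e4 e6 [lpkF (d.+2 + i).+1 f]lpkF_rec; last lia.
    lia.
Qed.

Lemma sum_split (F : nat -> nat) i m : i <= m ->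
  \sum_(1 <= k < m.+2) F k =
  \sum_(1 <= k < i.+1) F k + F i.+1 + \sum_(i.+1 <= k < m.+1) F k.+1.
Proof.
move=> him; rewrite (@big_cat_nat _ _ _ i.+1) //=; try lia.
rewrite (@big_ltn _ _ _ i.+1 m.+2); last lia.
by rewrite addnA; congr (_ + _); rewrite big_add1.
Qed.

Lemma sum_split2 (F : nat -> nat) i m : i <= m ->
  \sum_(1 <= k < m.+1) F k = \sum_(1 <= k < i.+1) F k + \sum_(i.+1 <= k < m.+1) F k.
Proof. by move=> him; rewrite (@big_cat_nat _ _ _ i.+1) //=; lia. Qed.

Lemma lrF_ins M i f m : i <= m -> (forall k, f k < M) ->
  lrF m.+1 (insF M i f) = lrF m f + (i == 0).
Proof.
move=> him fM; rewrite /lrF (sum_split _ him) (sum_split2 _ him).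
have -> : all (fun j => insF M i f i.+1 < insF M i f j) (iota 1 i.+1.-1) = (i == 0).
  case: i him => [|i] him //=.
  by rewrite insF_eq insF_le // ltnNge (ltnW (fM _)).
rewrite addnAC; congr (_ + _ + _).
- apply: eq_big_nat => k /andP[h1 h2]; congr (nat_of_bool _); apply: eq_in_all => j; rewrite mem_iota => hj.
  by rewrite !insF_le //; lia.
- apply: eq_big_nat => k /andP[h1 h2] /=; congr (nat_of_bool _).
  rewrite insF_gt //=.
  apply/allP/allP => H j; rewrite mem_iota => hj.
  + case: (ltnP i j) => hij.
    * have := H j.+1; rewrite mem_iota insF_gt /=; last lia.
      by apply; lia.
    * have := H j; rewrite mem_iota insF_le //; by apply; lia.
  + case: (ltnP i.+1 j) => hij.
    * rewrite insF_gt //; apply: H; rewrite mem_iota; lia.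
    * case: (ltnP i j) => hij2.
      - have -> : j = i.+1 by lia.
        by rewrite insF_eq fM.
      - rewrite insF_le //; apply: H; rewrite mem_iota; lia.
Qed.

Lemma rlF_ins M i f m : i <= m -> (forall k, f k < M) ->
  rlF m.+1 (insF M i f) = rlF m f + (i == m).
Proof.
move=> him fM; rewrite /rlF (sum_split _ him) (sum_split2 _ him).
have -> : all (fun j => insF M i f i.+1 < insF M i f j) (iota i.+2 (m.+1 - i.+1))
   = (i == m).
  case: (ltnP i m) => hm.
  - have -> : m.+1 - i.+1 = (m - i.+1).+1 by lia.
    rewrite /= insF_eq insF_gt // ltnNge (ltnW (fM _)) /=.
    by apply/esym/eqP; lia.
  - have -> : m = i by lia.
    by rewrite subnn eqxx.
rewrite addnAC; congr (_ + _ + _).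
- apply: eq_big_nat => k /andP[h1 h2]; congr (nat_of_bool _).
  rewrite insF_le; last lia.
  apply/allP/allP => H j; rewrite mem_iota => hj.
  + case: (ltnP i j) => hij.
    * have := H j.+1; rewrite mem_iota insF_gt /=; last lia.
      by apply; lia.
    * have := H j; rewrite mem_iota insF_le //; by apply; lia.
  + case: (ltnP i.+1 j) => hij.
    * rewrite insF_gt //; apply: H; rewrite mem_iota; lia.
    * case: (ltnP i j) => hij2.
      - have -> : j = i.+1 by lia.
        by rewrite insF_eq fM.
      - rewrite insF_le //; apply: H; rewrite mem_iota; lia.
- apply: eq_big_nat => k /andP[h1 h2] /=; congr (nat_of_bool _).
  rewrite insF_gt //=.
  apply/allP/allP => H j; rewrite mem_iota => hj.
  + have := H j.+1; rewrite mem_iota insF_gt /=; last lia.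
    by apply; lia.
  + rewrite insF_gt; last lia.
    apply: H; rewrite mem_iota; lia.
Qed.

Definition sg (t : seq nat) k := nth 0 (0 :: t) k.
Definition ins (M i : nat) (t : seq nat) := take i t ++ M :: drop i t.

Lemma sg_ins M i t : i <= size t -> sg (ins M i t) =1 insF M i (sg t).
Proof.
move=> hi [|k]; first by rewrite /insF.
rewrite /sg /insF /ins /= nth_cat size_take_min (minn_idPl hi).
case: (ltnP k i) => hk.
- by rewrite nth_take // ifT.
- rewrite eqSS; case: (ltnP i k) => hk2.
  + rewrite ifN; last by apply/negP => /eqP; lia.
    have -> : k - i = (k.-1 - i).+1 by lia.
    rewrite /= nth_drop; case: k hk hk2 => //= k hk hk2; congr nth; lia.
  + have -> : k = i by lia.
    by rewrite subnn eqxx.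
Qed.

Lemma ins_perm M i t : perm_eq (ins M i t) (M :: t).
Proof.
rewrite /ins -cat1s perm_catCA /= perm_cons cat_take_drop //.
Qed.

Lemma iotaSr m : iota 1 m.+1 = rcons (iota 1 m) m.+1.
Proof. have -> : m.+1 = m + 1 by rewrite addn1.
by rewrite iotaD cats1 addnC. Qed.

Lemma perms_ins m :
  perm_eq (permutations (iota 1 m.+1))
          [seq ins m.+1 i t | t <- permutations (iota 1 m), i <- iota 0 m.+1].
Proof.
have memP t : t \in permutations (iota 1 m) -> m.+1 \notin t /\ size t = m.
  rewrite mem_permutations => /[dup] /perm_mem -> /perm_size ->.
  by rewrite mem_iota size_iota; split=> //; lia.
apply: uniq_perm; first exact: permutations_uniq.
  apply: allpairs_uniq_dep; first exact: permutations_uniq.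
    by move=> t _; exact: iota_uniq.
  move=> [t1 i1] [t2 i2] /allpairsPdep[t1' [i1' [h1 h1' [-> ->]]]]
                          /allpairsPdep[t2' [i2' [h2 h2' [-> ->]]]] /= E.
  have [n1 s1] := memP _ h1; have [n2 s2] := memP _ h2.
  rewrite mem_iota in h1'; rewrite mem_iota in h2'.
  have idx t i : m.+1 \notin t -> size t = m -> i < m.+1 ->
      index m.+1 (ins m.+1 i t) = i.
    move=> nt st hi; rewrite /ins index_cat.
    have -> : (m.+1 \in take i t) = false.
      by apply/negP => /mem_take; apply/negP.
    by rewrite size_take_min /= eqxx addn0 st; apply/minn_idPl; lia.
  have rem_ins t i : m.+1 \notin t -> rem m.+1 (ins m.+1 i t) = t.
    move=> nt; rewrite /ins.
    elim: t i nt => [|a t IH] [|i] //=; rewrite ?eqxx //.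
    rewrite inE negb_or => /andP[na nt]; rewrite eq_sym (negbTE na).
    by rewrite IH.
  have ei : i1' = i2'.
    by rewrite -(idx t1' i1') // E idx //; lia.
  have et : t1' = t2' by rewrite -(rem_ins t1' i1') // E rem_ins.
  by rewrite ei et.
move=> u; apply/idP/allpairsPdep.
- rewrite mem_permutations => pu.
  have Mu : m.+1 \in u by rewrite (perm_mem pu) mem_iota; lia.
  have su : size u = m.+1 by rewrite (perm_size pu) size_iota.
  exists (rem m.+1 u), (index m.+1 u); split.
  + rewrite mem_permutations -(perm_cons m.+1).
    rewrite perm_sym; apply: (@perm_trans _ u); last exact: perm_to_rem.
    by rewrite perm_sym (permPl pu) iotaSr perm_rcons.
  + by rewrite mem_iota /=; move: Mu; rewrite -index_mem su.
  + rewrite remE /ins.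
    have hs : size (take (index m.+1 u) u) = index m.+1 u.
      by rewrite size_take_min; apply/minn_idPl; rewrite ltnW // index_mem.
    rewrite take_size_cat // drop_size_cat //.
    by rewrite -{2}(nth_index 0 Mu) -drop_nth ?index_mem // cat_take_drop.
- move=> [t [i [ht hi ->]]].
  rewrite mem_permutations; apply: (@perm_trans _ (m.+1 :: t)); first exact: ins_perm.
  rewrite mem_permutations in ht.
  by rewrite iotaSr perm_sym perm_rcons perm_cons perm_sym.
Qed.

Definition ls m (s : 'S_m) : seq nat := [seq (s j).+1 | j <- enum 'I_m].

Lemma ls_inj m : injective (@ls m).
Proof.
move=> s1 s2 /eq_in_map E; apply/permP => j.
by apply: val_inj; have /= [] := E j (mem_enum _ j).
Qed.

Lemma ls_perm m (s : 'S_m) : perm_eq (ls s) (iota 1 m).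
Proof.
have -> : iota 1 m = [seq i.+1 | i <- iota 0 m].
  by rewrite -(iotaDl 1). 
rewrite -val_enum_ord -map_comp.
have -> : ls s = [seq (succn \o val) i | i <- [seq s j | j <- enum 'I_m]].
  by rewrite -map_comp.
apply: perm_map.
apply: uniq_perm; first by rewrite map_inj_uniq ?enum_uniq //; exact: perm_inj.
  exact: enum_uniq.
move=> j; rewrite mem_enum; apply/mapP; exists (s^-1 j)%g; first by rewrite mem_enum.
by rewrite permKV.
Qed.

Lemma sum_Sn (R : nmodType) m (G : seq nat -> R) :
  (\sum_(s : 'S_m) G (ls s) = \sum_(t <- permutations (iota 1 m)) G t)%R.
Proof.
rewrite -(big_map (@ls m) xpredT G); apply: perm_big.
have U : uniq [seq ls i | i <- index_enum (perm_perm_type__canonical__fintype_Finite 'I_m)].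
  by rewrite map_inj_uniq ?index_enum_uniq //; exact: ls_inj.
apply: uniq_perm => //; first exact: permutations_uniq.
have sub : {subset [seq ls i | i <- index_enum (perm_perm_type__canonical__fintype_Finite 'I_m)] <= permutations (iota 1 m)}.
  by move=> t /mapP[s _ ->]; rewrite mem_permutations ls_perm.
have hsz : size (permutations (iota 1 m)) <= size [seq ls i | i <- index_enum (perm_perm_type__canonical__fintype_Finite 'I_m)].
  rewrite size_map size_permutations ?iota_uniq // size_iota -card_Sn cardT enumT.
  by rewrite [index_enum _]unlock.
by have [_ E] := uniq_min_size U sub hsz.
Qed.

Lemma sg_bound m t : t \in permutations (iota 1 m) -> forall k, sg t k < m.+1.
Proof.
rewrite mem_permutations => pt [|k] //=; rewrite /sg /=.
case: (ltnP k (size t)) => hk; last by rewrite nth_default.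
have : nth 0 t k \in iota 1 m by rewrite -(perm_mem pt) mem_nth.
by rewrite mem_iota; lia.
Qed.

Lemma size_perms m t : t \in permutations (iota 1 m) -> size t = m.
Proof. by rewrite mem_permutations => /perm_size ->; rewrite size_iota. Qed.

Lemma desF_le m f : desF m f <= m.-1.
Proof.
elim: m => [|[|m] IH]; first by rewrite /desF big_geq.
  by rewrite /desF big_geq.
by rewrite desF_rec //; move: IH => /=; case: (f _ < f _) => /=; lia.
Qed.

Lemma lrF_ge1 m f : 0 < m -> 0 < lrF m f.
Proof. by move=> hm; rewrite /lrF big_ltn //=. Qed.

Lemma rlF_ge1 m f : 0 < m -> 0 < rlF m f.
Proof. by move=> hm; rewrite /rlF big_nat_recr //= subnn /=; lia. Qed.

Lemma sum_if (V : nmodType) (r : seq nat) (b : pred nat) (A B : V) :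
  (\sum_(i <- r) (if b i then A else B) =
   A *+ (\sum_(i <- r) (b i : nat)) + B *+ (\sum_(i <- r) (~~ b i : nat)))%R.
Proof.
elim: r => [|a r IH]; first by rewrite !big_nil !mulr0n addr0.
rewrite !big_cons IH; case: (b a) => /=; rewrite ?add0n ?add1n !mulrS.
  by rewrite addrA.
by rewrite addrCA.
Qed.

Lemma sum_bnb (r : seq nat) (b : pred nat) :
  \sum_(i <- r) (b i : nat) + \sum_(i <- r) (~~ b i : nat) = size r.
Proof.
elim: r => [|a r IH]; first by rewrite !big_nil.
by rewrite !big_cons /=; case: (b a) => /=; lia.
Qed.

End Aux.
Import Aux.

Section Poly.
Variables (R : numFieldType) (y b : R).

Definition cc : R := 2^-1.
Definition PY : {poly R} := y%:P.
Definition PS : {poly R} := cc%:P * ('X + PY).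
Definition PB : {poly R} := b%:P.
Definition PT : {poly R} := (b / 2)%:P.

Definition op (n : nat) (P : {poly R}) :=
  (PT * ('X + PY) + 'X *+ n) * P + 'X * (PY - 'X) * P^`().

Lemma op_sum n (r : seq (seq nat)) (F : seq nat -> {poly R}) :
  op n (\sum_(t <- r) F t) = \sum_(t <- r) op n (F t).
Proof.
elim: r => [|a r IH]; first by rewrite !big_nil /op deriv0 !mulr0 addr0.
by rewrite !big_cons -IH /op derivD; ring.
Qed.

Lemma XderivXn d : 'X * ('X^d)^`() = ('X^d *+ d : {poly R}).
Proof.
rewrite derivXn; case: d => [|d] /=; first by rewrite !mulr0n mulr0.
by rewrite mulrnAr exprS.
Qed.

Lemma dCexp (c : R) k : ((c%:P) ^+ k)^`() = 0 :> {poly R}.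
Proof. by rewrite deriv_exp derivC mul0r mul0rn. Qed.

Definition wV n (t : seq nat) : {poly R} :=
  'X ^+ desF n.+1 (sg t) * PY ^+ (n - desF n.+1 (sg t))
  * PT ^+ (lrF n.+1 (sg t) + rlF n.+1 (sg t) - 2).

Lemma keyV n t : t \in permutations (iota 1 n.+1) ->
  \sum_(0 <= i < n.+2) wV n.+1 (ins n.+2 i t) = op n (wV n t).
Proof.
move=> ht; have st := size_perms ht; have fM := sg_bound ht.
set f := sg t.
have f0 : f 0 = 0 by [].
have E i : (i <= n.+1)%N -> sg (ins n.+2 i t) = insF n.+2 i f.
  by move=> hi; apply: functional_extensionality; apply: sg_ins; rewrite st.
set d := desF n.+1 f; set a := lrF n.+1 f; set r := rlF n.+1 f.
have hd : (d <= n)%N by have := desF_le n.+1 f.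
have ha : (0 < a)%N by apply: lrF_ge1.
have hr : (0 < r)%N by apply: rlF_ge1.
rewrite big_ltn // big_nat_recr //=.
have -> : wV n.+1 (ins n.+2 0 t) = 'X * PT * wV n t.
  rewrite /wV E //.
  have hD := desF_ins (isT : (0 <= n.+1)%N) f0 fM.
  rewrite f0 /= in hD; rewrite addn0 in hD.
  rewrite (lrF_ins (isT : (0 <= n.+1)%N) fM) (rlF_ins (isT : (0 <= n.+1)%N) fM).
  rewrite -/d -/a -/r hD addn0 /=.
  have -> : (a + 1 + r - 2 = (a + r - 2).+1)%N by lia.
  have -> : (n.+1 - (d + 1) = n - d)%N by lia.
  rewrite addn1 !exprS; ring.
have -> : wV n.+1 (ins n.+2 n.+1 t) = PY * PT * wV n t.
  rewrite /wV E //.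
  have hD := desF_ins (leqnn n.+1) f0 fM.
  rewrite ltnn /= !addn0 in hD.
  rewrite (lrF_ins (leqnn n.+1) fM) (rlF_ins (leqnn n.+1) fM).
  rewrite -/d -/a -/r hD eqxx /=.
  have -> : (a + 0 + (r + 1) - 2 = (a + r - 2).+1)%N by lia.
  have -> : (n.+1 - d = (n - d).+1)%N by lia.
  rewrite !exprS; ring.
have -> : \sum_(1 <= i < n.+1) wV n.+1 (ins n.+2 i t)
    = \sum_(1 <= i < n.+1) (if (f i.+1 < f i)%N then PY * wV n t else 'X * wV n t).
  apply: eq_big_nat => i /andP[h1 h2].
  rewrite /wV E; last lia.
  have hD := desF_ins (ltnW h2) f0 fM.
  rewrite h2 /= in hD.
  rewrite (lrF_ins (ltnW h2) fM) (rlF_ins (ltnW h2) fM).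
  have -> : (i == 0) = false by lia.
  have -> : (i == n.+1) = false by lia.
  rewrite -/d -/a -/r !addn0.
  rewrite -/d in hD.
  case: (f i.+1 < f i)%N hD => /= hD.
  - have -> : desF n.+2 (insF n.+2 i f) = d by lia.
    have -> : (n.+1 - d = (n - d).+1)%N by lia.
    rewrite !exprS; ring.
  - have -> : desF n.+2 (insF n.+2 i f) = d.+1 by lia.
    have -> : (n.+1 - d.+1 = n - d)%N by lia.
    rewrite !exprS; ring.
rewrite sum_if.
have Hd : \sum_(1 <= i < n.+1) ((f i.+1 < f i)%N : nat) = d by [].
have Hnd : \sum_(1 <= i < n.+1) (~~ (f i.+1 < f i)%N : nat) = (n - d)%N.
  have := sum_bnb (index_iota 1 n.+1) (fun i => (f i.+1 < f i)%N).
  rewrite size_iota Hd => H; apply: (@addnI d); rewrite H; lia.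
rewrite Hd Hnd /op.
have D : 'X * (wV n t)^`() = wV n t *+ d.
  rewrite /wV -/f -/d -/a -/r !derivM !dCexp !mulr0 !addr0.
  by rewrite !mulrA XderivXn !mulrnAl.
rewrite (_ : 'X * (PY - 'X) * (wV n t)^`() = (PY - 'X) * ('X * (wV n t)^`())); last ring.
rewrite D mulrnBr //; ring.
Qed.

Lemma hc2 : cc%:P * 2%:R = 1 :> {poly R}.
Proof.
rewrite -polyC_natr -polyCM /cc mulVf //.
by rewrite pnatr_eq0.
Qed.

Lemma hS2 : PS *+ 2 = 'X + PY.
Proof.
rewrite -mulr_natr /PS.
transitivity (('X + PY) * (cc%:P * 2%:R)); first ring.
by rewrite hc2 mulr1.
Qed.

Lemma hYc : PY = PS + (PY - 'X) * cc%:P.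
Proof.
rewrite /PS; transitivity (PY * (cc%:P * 2%:R)); first by rewrite hc2 mulr1.
rewrite -mulr_natr; ring.
Qed.

Lemma hTS : PT * ('X + PY) = PB * PS.
Proof. by rewrite /PT /PB /PS polyCM /cc; ring. Qed.

Lemma XdP1 l : 'X * (('X * PY) ^+ l)^`() = ('X * PY) ^+ l *+ l.
Proof.
rewrite deriv_exp derivM derivX /PY derivC mulr0 addr0 mul1r.
case: l => [|l] /=; first by rewrite !mulr0n mulr0.
by rewrite mulrnAr mulrA -exprS.
Qed.

Lemma dP2 k : (PS ^+ k)^`() = cc%:P * PS ^+ k.-1 *+ k.
Proof.
by rewrite deriv_exp /PS derivM derivC derivD derivX /PY derivC addr0 mul0r add0r mulr1.
Qed.

Lemma sum_pk1 n f : (\sum_(0 <= i < n) ((0 < i < n) && pkF f i) = lpkF n f)%N.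
Proof.
case: n => [|n]; first by rewrite /lpkF !big_geq.
rewrite big_ltn //= /lpkF; apply: eq_big_nat => i /andP[h1 h2].
by rewrite h1 h2.
Qed.

Lemma sum_pk2 n f : (\sum_(0 <= i < n) ((i.+1 < n) && pkF f i.+1) = lpkF n f)%N.
Proof.
case: n => [|n]; first by rewrite /lpkF !big_geq.
rewrite big_nat_recr //= ltnn andFb addn0 /lpkF big_add1 /=.
by apply: eq_big_nat => i /andP[h1 h2]; rewrite ltnS h2.
Qed.

Definition wU n (t : seq nat) : {poly R} :=
  ('X * PY) ^+ lpkF n (sg t) * PS ^+ (n - 2 * lpkF n (sg t)) * PB ^+ rlF n (sg t).

Lemma keyU n t : t \in permutations (iota 1 n) ->
  \sum_(0 <= i < n.+1) wU n.+1 (ins n.+1 i t) = op n (wU n t).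
Proof.
move=> ht; have st := size_perms ht; have fM := sg_bound ht.
set f := sg t.
have f0 : f 0 = 0 by [].
have E i : (i <= n)%N -> sg (ins n.+1 i t) = insF n.+1 i f.
  by move=> hi; apply: functional_extensionality; apply: sg_ins; rewrite st.
set l := lpkF n f; set r := rlF n f.
pose e i := (((0 < i < n) && pkF f i) + ((i.+1 < n) && pkF f i.+1))%N.
have he1 i : (e i <= 1)%N.
  rewrite /e /pkF /=.
  case: (0 < i < n)%N; case: (i.+1 < n)%N; case: (f i.-1 < f i)%N;
  case: (f i.+2 < f i.+1)%N; case h1: (f i.+1 < f i)%N; case h2: (f i < f i.+1)%N => //=.
  all: try lia.
have s1 := sum_pk1 n f; have s2 := sum_pk2 n f.
have se : (\sum_(0 <= i < n) e i = 2 * l)%N.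
  by rewrite /e big_split /= s1 s2; lia.
have se1 : (\sum_(0 <= i < n) (e i == 1%N : nat) = 2 * l)%N.
  rewrite -se; apply: eq_bigr => j _; have := he1 j; case: (e j) => [|[|]] //.
have se2 : (\sum_(0 <= i < n) (~~ (e i == 1%N) : nat) = n - 2 * l)%N.
  have := sum_bnb (index_iota 0 n) (fun i => e i == 1%N).
  rewrite size_iota se1 subn0 => H; apply: (@addnI (2 * l)); rewrite H; lia.
have hl : (2 * l <= n)%N.
  have := sum_bnb (index_iota 0 n) (fun i => e i == 1%N).
  rewrite size_iota se1; lia.
rewrite big_nat_recr //=.
have -> : wU n.+1 (ins n.+1 n t) = PS * PB * wU n t.
  rewrite /wU E //.
  have hL := lpkF_ins (leqnn n) f0 fM.
  rewrite ltnn andbF /= (_ : (n.+1 < n)%N = false) /= ?addn0 in hL; last lia.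
  rewrite hL (rlF_ins (leqnn n) fM) eqxx -/l -/r.
  have -> : (n.+1 - 2 * l = (n - 2 * l).+1)%N by lia.
  rewrite addn1 !exprS; ring.
pose Z := ('X * PY) ^+ l.+1 * PS ^+ (n - 2 * l).-1 * PB ^+ r.
have -> : \sum_(0 <= i < n) wU n.+1 (ins n.+1 i t)
    = \sum_(0 <= i < n) (if e i == 1%N then PS * wU n t else Z).
  apply: eq_big_nat => i /andP[h1 h2].
  rewrite /wU E; last lia.
  have hL := lpkF_ins (ltnW h2) f0 fM.
  have hL' : (lpkF n.+1 (insF n.+1 i f) + e i = l + 1)%N.
    by move: hL; rewrite /e h2 addnA.
  rewrite (rlF_ins (ltnW h2) fM) (_ : (i == n) = false) ?addn0 -/r -/f -/l; last lia.
  have := he1 i; case: (e i) hL' => [|[|]] // hL2 _ /=.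
  - rewrite addn0 in hL2; rewrite hL2 /Z.
    by rewrite addn1; have -> : (n.+1 - 2 * l.+1 = (n - 2 * l).-1)%N by lia.
  - have -> : lpkF n.+1 (insF n.+1 i f) = l by lia.
    have -> : (n.+1 - 2 * l = (n - 2 * l).+1)%N by lia.
    rewrite !exprS; ring.
rewrite sum_if se1 se2 /op.
rewrite (_ : 'X * (PY - 'X) * (wU n t)^`() = (PY - 'X) * ('X * (wU n t)^`())); last ring.
have D : 'X * (wU n t)^`() =
    ('X * PY) ^+ l *+ l * PS ^+ (n - 2 * l) * PB ^+ r
    + ('X * PY) ^+ l * ('X * (cc%:P * PS ^+ (n - 2 * l).-1 *+ (n - 2 * l))) * PB ^+ r.
  rewrite /wU -/f -/l -/r !derivM dCexp mulr0 addr0 dP2 -XdP1; ring.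
rewrite D /Z.
have hL2 := hS2; have hY2 := hYc; have hT2 := hTS.
set P1 := ('X * PY) ^+ l; set Bp := PB ^+ r.
rewrite /wU -/f -/l -/r -/P1 -/Bp.
case E2 : (n - 2 * l)%N => [|k].
- have hn : n = (2 * l)%N by lia.
  rewrite !mulr0n !addr0 expr0 !mulr1 hn.
  apply/eqP; rewrite -subr_eq0; apply/eqP.
  transitivity ((P1 * Bp *+ l) * (PS *+ 2 - ('X + PY)) + (P1 * Bp) * (PB * PS - PT * ('X + PY)));
    first ring.
  by rewrite hL2 hT2 !subrr !mulr0 addr0.
- have hn : n = (k.+1 + 2 * l)%N by lia.
  rewrite /= hn.
  set A := PS ^+ k.
  rewrite exprS -/A.
  apply/eqP; rewrite -subr_eq0; apply/eqP.
  transitivity ((P1 * PS * A * Bp *+ l) * (PS *+ 2 - ('X + PY))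
     + ('X * P1 * A * Bp *+ k.+1) * (PY - (PS + (PY - 'X) * cc%:P))
     + (P1 * PS * A * Bp) * (PB * PS - PT * ('X + PY))); first (rewrite /P1 exprS; ring).
  by rewrite -hY2 hL2 hT2 !subrr !mulr0 !addr0.
Qed.

End Poly.

Lemma step_sum (V : nmodType) m (G : seq nat -> V) :
  \sum_(u <- permutations (iota 1 m.+1)) G u =
  \sum_(t <- permutations (iota 1 m)) \sum_(0 <= i < m.+1) G (ins m.+1 i t).
Proof.
rewrite (perm_big _ (perms_ins m)) big_allpairs_dep; apply: eq_bigr => t _.
by rewrite /index_iota subn0.
Qed.

Section Main.
Variables (R : numFieldType) (y b : R).

Definition U n := \sum_(t <- permutations (iota 1 n)) wU y b n t.
Definition V n := \sum_(t <- permutations (iota 1 n.+1)) wV y b n t.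

Lemma UV n : U n = V n.
Proof.
elim: n => [|n IH].
- rewrite /U /V /=.
  rewrite !big_cons !big_nil !addr0 /wU /wV.
  have h1 f : lpkF 0 f = 0%N by rewrite /lpkF big_geq.
  have h2 f : rlF 0 f = 0%N by rewrite /rlF big_geq.
  have h3 f : desF 1 f = 0%N by rewrite /desF big_geq.
  have h4 f : lrF 1 f = 1%N by rewrite /lrF big_nat1.
  have h5 f : rlF 1 f = 1%N by rewrite /rlF big_nat1.
  by rewrite h1 h2 h3 h4 h5 !expr0 !mulr1.
- have -> : U n.+1 = op y b n (U n).
    rewrite /U step_sum op_sum big_seq_cond [RHS]big_seq_cond.
    by apply: eq_bigr => t /andP[ht _]; rewrite keyU.
  have -> : V n.+1 = op y b n (V n).
    rewrite /V step_sum op_sum big_seq_cond [RHS]big_seq_cond.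
    by apply: eq_bigr => t /andP[ht _]; rewrite keyV.
  by rewrite IH.
Qed.

End Main.

Unset Implicit Arguments.

Theorem theorem1p10 (R : numFieldType) (x y beta : R) (n : nat) :
  \sum_(s : 'S_n)
     (x * y) ^+ lpk s * ((x + y) / 2) ^+ (n - 2 * lpk s)%N * beta ^+ rlmin s
  = \sum_(s : 'S_n.+1)
     x ^+ des s * y ^+ (n - des s)%N * (beta / 2) ^+ (lrmin s + rlmin s - 2)%N.
Proof.
have H := congr1 (fun p => p.[x]) (UV y beta n).
rewrite /= /U /V !horner_sum in H.
pose GU := fun t => (x * y) ^+ lpkF n (sg t)
   * ((x + y) / 2) ^+ (n - 2 * lpkF n (sg t))%N * beta ^+ rlF n (sg t).
pose GV := fun t => x ^+ desF n.+1 (sg t)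
   * y ^+ (n - desF n.+1 (sg t))%N * (beta / 2) ^+ (lrF n.+1 (sg t) + rlF n.+1 (sg t) - 2)%N.
transitivity (\sum_(s : 'S_n) GU (ls s)); first by apply: eq_bigr.
transitivity (\sum_(s : 'S_n.+1) GV (ls s)); last by apply: eq_bigr.
rewrite (sum_Sn n GU) (sum_Sn n.+1 GV).
have E1 : forall t, (wU y beta n t).[x] = GU t.
  by move=> t; rewrite /wU /PY /PS /PB /cc /GU !hornerE [_ * (x + y)]mulrC.
have E2 : forall t, (wV y beta n t).[x] = GV t.
  by move=> t; rewrite /wV /PY /PT /GV !hornerE.
rewrite (eq_bigr _ (fun t _ => E1 t)) (eq_bigr _ (fun t _ => E2 t)) in H.
exact: H.
Qed.
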